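(* Let $\mathbb{F}$, $\mathfrak g$, $\mathcal C$, $\mathcal C^{du}$, $M$, $Lie(\cdot)$ be as in the context. Let $h\in\mathfrak g$ be such that for every object $V$ of $\mathcal C$: (1) $h_V$ is diagonalizable with integer eigenvalues, and (2) $s^{h_V}\in End_{V^{du}}(V)$ for every $s\in\mathbb F^\times$. Then $h$ is an integrable locally finite element of $\mathfrak g$. Furthermore: (a) for every $s\in\mathbb F^\times$ there is an element $s^h\in M$ acting on each object $V$ by $s^{h_V}$; (b) the set $EV$ of all eigenvalues of $h_V$, $V$ ranging over objects of $\mathcal C$, is a submonoid of $\mathbb Z$, and, equipping $\mathbb F^\times$ with the Laurent polynomial functions $\mathbb F[s,s^{-1}]$, the map $t_h:(\mathbb F^\times,\cdot)\to M$, $s\mapsto s^h$, is a morphism of monoids and a morphism of sets with coordinate rings whose comorphism has image $t_h^*(\mathbb F[M])=\bigoplus_{b\in EV}\mathbb F s^b$; denote its image $T_h$; (c) $Lie(T_h)=\mathbb Fh$.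
   Context: Let $\mathbb F$ be a field of characteristic $0$, $\mathfrak g$ a Lie algebra over $\mathbb F$. $\mathcal C$: full subcategory of $\mathfrak g$-modules closed under isomorphism and submodules, containing a direct sum and tensor product of any two objects and a one-dimensional trivial module, with only $0\in\mathfrak g$ acting trivially on all objects. $x_V$ = action. Category of duals: point-separating $V^{du}\subseteq V^*$ with $\phi\circ x_V\in V^{du}$ ($x\in\mathfrak g$), $\psi\circ\alpha\in V^{du}$ for morphisms $\alpha:V\to W$, $\psi\in W^{du}$, $(V\oplus W)^{du}=V^{du}\oplus W^{du}$, $V^{du}\otimes W^{du}\subseteq(V\otimes W)^{du}$. $End_{V^{du}}(V)=\{\varphi:\phi\circ\varphi\in V^{du}\ \forall\phi\}$. $Nat$: families $(m_V)_V$, $m_V\in End_{V^{du}}(V)$, commuting with all morphisms. $M=\{m\in Nat:m_{V\otimes W}=m_V\otimes m_W,\ m_{V_0}=id$ for trivial one-dimensional $V_0\}$; $\mathbb F[M]=\{f_{\phi v}\}$, $f_{\phi v}(m)=\phi(m_Vv)$; Zariski topology via common zero sets. $Lie(M)=\{y\in Nat:y_{V\otimes W}=y_V\otimes id+id\otimes y_W,\ y_{V_0}=0,\ \exists\,\delta_y:\mathbb F[M]\to\mathbb F$ with $\delta_y(f_{\phi v})=\phi(y_Vv)\}$; for a submonoid $N$ with vanishing ideal $I(N)$, $Lie(N)=\{y\in Lie(M):\delta_y(I(N))=0\}$; $\mathfrak g$ identified with $\{(y_V)_V\}\subseteq Nat$. If $\alpha\in End(W)$ is diagonalizable with integer eigenvalues,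 i.e. $\alpha w_j=z_jw_j$ for a basis $(w_j)$ with $z_j\in\mathbb Z$, then $s^\alpha w_j:=s^{z_j}w_j$ for $s\in\mathbb F^\times$. For a subalgebra $\mathfrak s$ acting locally finitely, $\mathcal C(\mathfrak s)$ is the category of $\mathfrak s$-modules isomorphic to finite-dimensional $\mathfrak s$-submodules of objects of $\mathcal C$ (all $\mathfrak s$-maps as morphisms), $M(\mathfrak s)$ the monoid obtained from it by the same construction with full duals $U^{du}=U^*$, with its coordinate ring and Zariski topology; it acts on objects $V$ of $\mathcal C$ via finite-dimensional $\mathfrak s$-submodules. An element $e\in\mathfrak g$ is integrable locally finite if it acts locally finitely on all objects and there is a Zariski dense submonoid $D\subseteq M(\mathbb Fe)$ with $d_V\in End_{V^{du}}(V)$ for all $d\in D$ and objects $V$. A morphism of sets with coordinate rings $\varphi:X\to Y$ is a map with $f\circ\varphi\in\mathbb F[X]$ for all $f\in\mathbb F[Y]$; its comorphism is $\varphi^*(f)=f\circ\varphi$. *)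

(* Defs.v *)
From HB Require Import structures.
From mathcomp Require Import all_boot all_order all_algebra.
Set Implicit Arguments. Unset Strict Implicit. Unset Printing Implicit Defensive.
Import Order.TTheory GRing.Theory Num.Theory.
Local Open Scope ring_scope.

Definition lin (F : fieldType) (U W : lmodType F) (f : U -> W) :=
  forall (a : F) (u v : U), f (a *: u + v) = a *: f u + f v.
Definition linfun (F : fieldType) (U : lmodType F) (f : U -> F) :=
  forall (a : F) (u v : U), f (a *: u + v) = a * f u + f v.
Definition bilin (F : fieldType) (U W T : lmodType F) (b : U -> W -> T) :=
  (forall w, lin (fun u => b u w)) /\ (forall u, lin (b u)).
Definition is_tensor (F : fieldType) (U W T : lmodType F) (b : U -> W -> T) :=
  bilin b /\ forall (X : lmodType F) (f : U -> W -> X), bilin f ->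
    exists g : T -> X, [/\ lin g, (forall u w, g (b u w) = f u w) &
      forall g' : T -> X, lin g' -> (forall u w, g' (b u w) = f u w) ->
        forall t, g' t = g t].
Definition is_dsum (F : fieldType) (U W D : lmodType F)
  (i1 : U -> D) (i2 : W -> D) (p1 : D -> U) (p2 : D -> W) :=
  [/\ lin i1, lin i2, lin p1, lin p2 &
   [/\ forall u, p1 (i1 u) = u, forall w, p2 (i2 w) = w,
       forall w, p1 (i2 w) = 0, forall u, p2 (i1 u) = 0
     & forall d, i1 (p1 d) + i2 (p2 d) = d]].
Definition inspan (F : fieldType) (U : lmodType F) (s : seq U) (v : U) :=
  exists c : 'I_(size s) -> F, v = \sum_(i < size s) c i *: s`_i.
Definition findim (F : fieldType) (U : lmodType F) :=
  exists s : seq U, forall v, inspan s v.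
Definition onedim (F : fieldType) (U : lmodType F) :=
  exists u0 : U, u0 != 0 /\ forall v, exists c : F, v = c *: u0.
(* a is diagonalizable with integer eigenvalues: V is spanned by eigenvectors
   of a with integer eigenvalues (equivalently, V has a basis of such). *)
Definition intdiag (F : fieldType) (V : lmodType F) (a : V -> V) :=
  forall v, exists s : seq (int * V),
    (forall p, p \in s -> a p.2 = p.1%:~R *: p.2) /\ v = \sum_(p <- s) p.2.
Definition is_spow (F : fieldType) (V : lmodType F) (a : V -> V) (s : F) (f : V -> V) :=
  lin f /\ forall (z : int) (w : V), a w = z%:~R *: w -> f w = s ^ z *: w.
Definition laurent (F : fieldType) (q : F -> F) :=
  exists l : seq (F * int), forall x, x != 0 -> q x = \sum_(p <- l) p.1 * x ^ p.2.

Record lieAlgebra (F : fieldType) := LieAlgebra {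
  lie_sort :> lmodType F;
  lie_br : lie_sort -> lie_sort -> lie_sort;
  _ : forall a x y z, lie_br (a *: x + y) z = a *: lie_br x z + lie_br y z;
  _ : forall a x y z, lie_br z (a *: x + y) = a *: lie_br z x + lie_br z y;
  _ : forall x, lie_br x x = 0;
  _ : forall x y z, lie_br x (lie_br y z) + lie_br y (lie_br z x) + lie_br z (lie_br x y) = 0 }.

Record gmod (F : fieldType) (g : lieAlgebra F) := GMod {
  gm_sort :> lmodType F;
  gm_act : g -> gm_sort -> gm_sort;
  _ : forall x a u v, gm_act x (a *: u + v) = a *: gm_act x u + gm_act x v;
  _ : forall a x y v, gm_act (a *: x + y) v = a *: gm_act x v + gm_act y v;
  _ : forall x y v, gm_act (lie_br x y) v = gm_act x (gm_act y v) - gm_act y (gm_act x v) }.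

Section GMods.
Variables (F : fieldType) (g : lieAlgebra F).
Local Notation gm := (gmod g).

Definition ghom (V W : gm) (f : V -> W) :=
  lin f /\ forall x v, f (gm_act x v) = gm_act x (f v).
Definition giso (V W : gm) (f : V -> W) := ghom f /\ bijective f.
Definition gtrivial1 (V : gm) := onedim V /\ forall x (v : V), gm_act x v = 0.
Definition gdsum (V W D : gm) (i1 : V -> D) (i2 : W -> D) (p1 : D -> V) (p2 : D -> W) :=
  [/\ is_dsum i1 i2 p1 p2, ghom i1, ghom i2, ghom p1 & ghom p2].
Definition gtensor (V W T : gm) (b : V -> W -> T) :=
  is_tensor b /\ forall x v w, gm_act x (b v w) = b (gm_act x v) w + b v (gm_act x w).

(* the category C (full subcategory, given by its class of objects) *)
Definition is_category (C : gm -> Prop) :=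
  [/\ (forall (V W : gm) (f : V -> W), C V -> giso f -> C W),
      (forall (V W : gm) (f : W -> V), C V -> ghom f -> injective f -> C W),
      (forall V W, C V -> C W -> exists (D : gm) i1 i2 p1 p2, C D /\ @gdsum V W D i1 i2 p1 p2),
      (forall V W, C V -> C W -> exists (T : gm) b, C T /\ @gtensor V W T b) &
      (exists V0, C V0 /\ gtrivial1 V0) /\
      (forall x : g, (forall V, C V -> forall v : V, gm_act x v = 0) -> x = 0)].

(* a category of duals V^du (subspaces of the algebraic dual of V) *)
Definition is_duals (C : gm -> Prop) (du : forall V : gm, (V -> F) -> Prop) :=
  [/\ (forall V, C V -> forall phi, du V phi -> linfun phi),
      (forall V, C V -> du V (fun _ => 0) /\
         forall a phi psi, du V phi -> du V psi -> du V (fun v => a * phi v + psi v)),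
      (forall V, C V -> forall v : V, (forall phi, du V phi -> phi v = 0) -> v = 0),
      (forall V, C V -> forall x phi, du V phi -> du V (fun v => phi (gm_act x v))) &
   [/\ (forall (V W : gm) (al : V -> W), C V -> C W -> ghom al ->
          forall psi, du W psi -> du V (psi \o al)),
       (forall V W D i1 i2 p1 p2, C V -> C W -> C D -> @gdsum V W D i1 i2 p1 p2 ->
          forall chi, du D chi <-> exists phi psi,
            [/\ du V phi, du W psi & forall d, chi d = phi (p1 d) + psi (p2 d)]) &
       (forall V W T b, C V -> C W -> C T -> @gtensor V W T b ->
          forall phi psi chi, du V phi -> du W psi -> linfun chi ->
            (forall v w, chi (b v w) = phi v * psi w) -> du T chi)]].

Definition EndDu (du : forall V : gm, (V -> F) -> Prop) (V : gm) (f : V -> V) :=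
  lin f /\ forall psi, du V psi -> du V (psi \o f).

(* families indexed by objects; only their values on objects of C matter *)
Definition natT := forall V : gm, V -> V.
Definition natEq (C : gm -> Prop) (m m' : natT) :=
  forall V, C V -> forall v : V, m V v = m' V v.

Unset Implicit Arguments.
Variables (C : gm -> Prop) (du : forall V : gm, (V -> F) -> Prop).
Set Implicit Arguments.

Definition isNat (m : natT) :=
  (forall V, C V -> EndDu du (m V)) /\
  forall (V W : gm) (al : V -> W), C V -> C W -> ghom al ->
    forall v, al (m V v) = m W (al v).
Definition inM (m : natT) :=
  [/\ isNat m,
      (forall V W T b, C V -> C W -> C T -> @gtensor V W T b ->
         forall v w, m T (b v w) = b (m V v) (m W w)) &
      (forall V0, C V0 -> gtrivial1 V0 -> forall v, m V0 v = v)].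
(* F[M] = { f_{phi v} }, functions on M *)
Definition coordM (f : natT -> F) :=
  exists (V : gm) (phi : V -> F) (v : V),
    [/\ C V, du V phi & forall m, inM m -> f m = phi (m V v)].
Definition vanishI (N : natT -> Prop) (f : natT -> F) :=
  coordM f /\ forall m, N m -> f m = 0.
Definition isDelta (y : natT) (delta : (natT -> F) -> F) :=
  forall (V : gm) (phi : V -> F) (v : V) (f : natT -> F), C V -> du V phi ->
    (forall m, inM m -> f m = phi (m V v)) -> delta f = phi (y V v).
Definition inLieM (y : natT) :=
  [/\ isNat y,
      (forall V W T b, C V -> C W -> C T -> @gtensor V W T b ->
         forall v w, y T (b v w) = b (y V v) w + b v (y W w)),
      (forall V0, C V0 -> gtrivial1 V0 -> forall v, y V0 v = 0) &
      exists delta, isDelta y delta].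
Definition inLie (N : natT -> Prop) (y : natT) :=
  inLieM y /\ forall delta, isDelta y delta -> forall f, vanishI N f -> delta f = 0.

(* An Fe-module is a space U with the linear endomorphism a by which e acts. *)
Definition CFe (e : g) (U : lmodType F) (a : U -> U) :=
  [/\ lin a, findim U &
      exists (V : gm) (j : U -> V),
        [/\ C V, lin j, injective j & forall u, j (a u) = gm_act e (j u)]].
Definition natT' := forall U : lmodType F, (U -> U) -> U -> U.
Definition fetensor (U W T : lmodType F) (a : U -> U) (a' : W -> W) (c : T -> T)
  (b : U -> W -> T) := is_tensor b /\ forall u w, c (b u w) = b (a u) w + b u (a' w).
Definition inMFe (e : g) (m : natT') :=
  [/\ (forall (U : lmodType F) (a : U -> U), CFe e a -> lin (m U a)),
      (forall (U : lmodType F) (a : U -> U) (W : lmodType F) (a' : W -> W) (f : U -> W), CFe e a -> CFe e a' -> lin f ->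
         (forall u, f (a u) = a' (f u)) -> forall u, f (m U a u) = m W a' (f u)),
      (forall (U : lmodType F) (a : U -> U) (W : lmodType F) (a' : W -> W) (T : lmodType F) (c : T -> T) b,
         CFe e a -> CFe e a' -> CFe e c -> fetensor a a' c b ->
         forall u w, m T c (b u w) = b (m U a u) (m W a' w)) &
      (forall (U : lmodType F) (a : U -> U), CFe e a -> onedim U -> (forall u, a u = 0) ->
         forall u, m U a u = u)].
(* F[M(Fe)], with full duals *)
Definition coordMFe (e : g) (f : natT' -> F) :=
  exists (U : lmodType F) (a : U -> U) (phi : U -> F) (u : U),
    [/\ CFe e a, linfun phi & forall m, inMFe e m -> f m = phi (m U a u)].
(* gV is the action of d on V, computed on finite-dimensional Fe-submodules *)
Definition actsOn (e : g) (d : natT') (V : gm) (gV : V -> V) :=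
  forall (U : lmodType F) (a : U -> U) (j : U -> V), CFe e a -> lin j -> injective j ->
    (forall u, j (a u) = gm_act e (j u)) -> forall u, gV (j u) = j (d U a u).
Definition locfin (e : g) :=
  forall V : gm, C V -> forall v : V, exists s : seq V,
    inspan s v /\ forall w, inspan s w -> inspan s (gm_act e w).
Definition int_locfin (e : g) :=
  locfin e /\ exists D : natT' -> Prop,
    [/\ (forall d, D d -> inMFe e d),
        D (fun U a u => u),
        (forall d d', D d -> D d' -> D (fun U a u => d U a (d' U a u))),
        (* Zariski density of D in M(Fe) *)
        (forall f, coordMFe e f -> (forall d, D d -> f d = 0) ->
           forall m, inMFe e m -> f m = 0) &
        (forall d, D d -> forall V, C V -> exists gV : V -> V, actsOn e d gV /\ EndDu du gV)].

Definition EV (h : g) (z : int) :=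
  exists V : gm, C V /\ exists w : V, w != 0 /\ gm_act h w = z%:~R *: w.

End GMods.

(* Main.v *)
Require Import Defs.
From HB Require Import structures.
From mathcomp Require Import all_boot all_order all_algebra zify ring.
From Stdlib Require Import ClassicalEpsilon FunctionalExtensionality Classical.
Import Defs.
Set Implicit Arguments. Unset Strict Implicit. Unset Printing Implicit Defensive.
Import Order.TTheory GRing.Theory Num.Theory.
Local Open Scope ring_scope.


Lemma partition_undup (T K : eqType) (R : nmodType) (kf : T -> K) (l : seq T) (G : T -> R) :
  \sum_(k <- undup (map kf l)) \sum_(p <- l | kf p == k) G p = \sum_(p <- l) G p.
Proof.
under eq_bigr do rewrite big_mkcond.
rewrite exchange_big /=; apply: eq_big_seq => p pl.
rewrite -big_mkcond -big_filter.
have -> : [seq i <- undup [seq kf i | i <- l] | kf p == i] = [:: kf p].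
  rewrite -(filter_pred1_uniq (undup_uniq (map kf l))).
    by apply: eq_filter => k /=; rewrite eq_sym.
  by rewrite mem_undup; apply: map_f.
by rewrite big_seq1.
Qed.


Section Lin.
Variable F : fieldType.

Section L.
Variables (U W : lmodType F) (f : U -> W) (Hf0 : lin f).
Let Hf : forall a u v, f (a *: u + v) = a *: f u + f v := Hf0.
Lemma lin0 : f 0 = 0.
Proof. have H := Hf 1 0 0; rewrite !addr0 !scale1r in H. have H2 : f 0 - f 0 = f 0 + f 0 - f 0 by rewrite {1}H. by move: H2; rewrite subrr addrK. Qed.
Lemma linD u v : f (u + v) = f u + f v.
Proof. by have := Hf 1 u v; rewrite !scale1r. Qed.
Lemma linZ a u : f (a *: u) = a *: f u.
Proof. by rewrite -[a *: u]addr0 Hf lin0 addr0. Qed.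
Lemma linN u : f (- u) = - f u.
Proof. by rewrite -scaleN1r linZ scaleN1r. Qed.
Lemma linB u v : f (u - v) = f u - f v.
Proof. by rewrite linD linN. Qed.
Lemma lin_sum (I : Type) (r : seq I) (P : pred I) (G : I -> U) :
  f (\sum_(i <- r | P i) G i) = \sum_(i <- r | P i) f (G i).
Proof. exact: (big_morph f linD lin0). Qed.
End L.

Lemma lin_intro (U W : lmodType F) (f : U -> W) :
  (forall u v, f (u + v) = f u + f v) -> (forall a u, f (a *: u) = a *: f u) -> lin f.
Proof. by move=> HD HZ a u v; rewrite HD HZ. Qed.

Lemma lin_id (U : lmodType F) : lin (fun u : U => u).
Proof. by []. Qed.
Lemma lin_comp (U V W : lmodType F) (f : V -> W) (g : U -> V) : lin f -> lin g -> lin (fun u => f (g u)).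
Proof. by move=> Hf Hg a u v; rewrite Hg Hf. Qed.

Lemma linfun_lin (U : lmodType F) (phi : U -> F) : linfun phi -> lin (phi : U -> F^o).
Proof. by move=> H a u v; rewrite H. Qed.

Definition eigl (U : lmodType F) (a : U -> U) (l : seq (int * U)) :=
  forall p, p \in l -> a p.2 = p.1%:~R *: p.2.

Lemma spow_sum (U : lmodType F) (a : U -> U) s f l :
  is_spow a s f -> eigl a l -> f (\sum_(p <- l) p.2) = \sum_(p <- l) s ^ p.1 *: p.2.
Proof.
move=> [Hf He] Hl; rewrite (lin_sum Hf) big_seq [RHS]big_seq.
by apply: eq_bigr => p pl; rewrite (He p.1) // Hl.
Qed.

Lemma spow_unique (U : lmodType F) (a : U -> U) s f f' :
  intdiag a -> is_spow a s f -> is_spow a s f' -> forall v, f v = f' v.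
Proof.
move=> Hd Hf Hf' v; have [l [Hl ->]] := Hd v.
by rewrite (spow_sum Hf Hl) (spow_sum Hf' Hl).
Qed.

Lemma spow_nat (U W : lmodType F) (a : U -> U) (a' : W -> W) (f : U -> W) s fU fW :
  lin f -> (forall u, f (a u) = a' (f u)) -> intdiag a -> is_spow a s fU -> is_spow a' s fW ->
  forall u, f (fU u) = fW (f u).
Proof.
move=> Hf Hint Hd HU HW u; have [l [Hl ->]] := Hd u.
rewrite (spow_sum HU Hl) (lin_sum Hf) (lin_sum Hf) (lin_sum HW.1) !big_seq.
apply: eq_bigr => p pl; rewrite (linZ Hf) (HW.2 p.1) // -Hint Hl // (linZ Hf) //.
Qed.

Lemma spow_tensor (U W T : lmodType F) (a : U -> U) (a' : W -> W) (c : T -> T)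
  (b : U -> W -> T) s fU fW fT :
  s != 0 -> bilin b -> (forall u w, c (b u w) = b (a u) w + b u (a' w)) ->
  intdiag a -> intdiag a' -> is_spow a s fU -> is_spow a' s fW -> is_spow c s fT ->
  forall u w, fT (b u w) = b (fU u) (fW w).
Proof.
move=> s0 [Hb1 Hb2] Hc Hd Hd' HU HW HT u w.
have [l [Hl ->]] := Hd u; have [l' [Hl' ->]] := Hd' w.
rewrite (spow_sum HU Hl) (spow_sum HW Hl') (lin_sum (Hb1 _)) (lin_sum HT.1).
rewrite [RHS](lin_sum (Hb1 _)) big_seq [RHS]big_seq; apply: eq_bigr => p pl.
rewrite (lin_sum (Hb2 _)) (lin_sum HT.1) [RHS](lin_sum (Hb2 _)).
rewrite big_seq [RHS]big_seq; apply: eq_bigr => q ql.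
rewrite (linZ (Hb1 _)) (linZ (Hb2 _)) scalerA -expfzDr //.
apply: (HT.2); rewrite Hc Hl // Hl' // (linZ (Hb1 _)) (linZ (Hb2 _)).
by rewrite intrD scalerDl.
Qed.

End Lin.


Lemma leq_elem_sum (T : eqType) (l : seq T) (G : T -> nat) p :
  p \in l -> (G p <= \sum_(q <- l) G q)%N.
Proof.
elim: l => // q l IH; rewrite in_cons big_cons => /orP [/eqP -> | /IH H].
  exact: leq_addr.
exact: leq_trans H (leq_addl _ _).
Qed.

Section Char0.
Variables (F : fieldType) (ch0 : [pchar F] =i pred0).

Lemma natr_inj0 n : (n%:R : F) = 0 -> n = 0%N.
Proof. by move/eqP; rewrite (pcharf0P F).1 // => /eqP. Qed.

Lemma intr_eq0' (z : int) : (z%:~R : F) = 0 -> z = 0.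
Proof.
case: z => n /=; first by move/natr_inj0 => ->.
by rewrite NegzE mulrNz => /eqP; rewrite oppr_eq0 => /eqP /natr_inj0.
Qed.

Lemma intr_inj' (z z' : int) : (z%:~R : F) = z'%:~R -> z = z'.
Proof. by move=> H; apply/eqP; rewrite -subr_eq0; apply/eqP/intr_eq0'; rewrite intrB H subrr. Qed.

Lemma laurent0 (l : seq (F * int)) :
  (forall s, s != 0 -> \sum_(p <- l) p.1 * s ^ p.2 = 0) ->
  forall chi : int -> F, \sum_(p <- l) p.1 * chi p.2 = 0.
Proof.
move=> H chi.
set N : nat := \sum_(p <- l) `|p.2|%N.
have HN p : p \in l -> (`|p.2| <= N)%N by move=> pl; exact: (leq_elem_sum (fun q => `|q.2|%N) pl).
pose e := fun p : F * int => absz (p.2 + N%:Z)%R.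
have He p : p \in l -> (e p)%:Z = p.2 + N.
  move=> /HN pN; have h : (- (N%:Z) <= p.2)%R by apply: lerNnormlW; rewrite -abszE lez_nat.
  by rewrite /e gez0_abs // -(lerD2r (- (N%:Z))) -addrA subrr addr0 add0r.
pose P : {poly F} := \sum_(p <- l) p.1 *: 'X^(e p).
have Pev x : x != 0 -> P.[x] = 0.
  move=> x0; rewrite /P horner_sum.
  transitivity ((\sum_(p <- l) p.1 * x ^ p.2) * x ^+ N); last by rewrite H // mul0r.
  rewrite mulr_suml big_seq [RHS]big_seq; apply: eq_bigr => p pl.
  rewrite hornerZ hornerXn -mulrA; congr (_ * _).
  have -> : x ^+ e p = x ^ ((e p)%:Z) by [].
  by rewrite He // expfzDr.
have P0 : P = 0.
  apply/eqP; apply/negPn/negP => Pn0.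
  pose rs := [seq (i.+1)%:R : F | i <- iota 0 (size P)].
  have Ha : all (root P) rs.
    apply/allP => x /mapP [i _ ->]; apply/eqP/Pev.
    by apply/eqP => /natr_inj0.
  have Hu : uniq rs.
    rewrite map_inj_uniq ?iota_uniq // => i j H1.
    by have [] := intr_inj' (z := i.+1) (z' := j.+1) H1.
  by have := max_poly_roots Pn0 Ha Hu; rewrite size_map size_iota ltnn.
have Pk k : \sum_(p <- l | e p == k) p.1 = 0.
  by have := congr1 (fun q : {poly F} => q`_k) P0; rewrite /= coef_sumMXn coef0.
rewrite -(partition_undup e) big1 // => k _.
rewrite big_seq_cond (eq_bigr (fun p => p.1 * chi (k%:Z - N%:Z)%R)).
  by rewrite -mulr_suml -big_seq_cond Pk mul0r.
move=> p /andP [pl /eqP epk]; congr (_ * chi _).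
by rewrite -epk He // addrK.
Qed.


Fixpoint pop (U : lmodType F) (op : U -> U) (zs : seq int) (w : U) : U :=
  if zs is z :: zs' then op (pop op zs' w) - z%:~R *: pop op zs' w else w.

Lemma pop_lin (U : lmodType F) (op : U -> U) zs : lin op -> lin (pop op zs).
Proof.
move=> Hop; elim: zs => [|z zs IH] //=; apply: lin_intro => [u v|c u].
  rewrite (linD IH) (linD Hop) scalerDr; rewrite opprD.
  by rewrite addrACA.
by rewrite (linZ IH) (linZ Hop) scalerBr !scalerA mulrC.
Qed.

Lemma pop_comm (U V : lmodType F) (a : U -> U) (hV : V -> V) (j : U -> V) zs u :
  lin j -> (forall u, j (a u) = hV (j u)) -> j (pop a zs u) = pop hV zs (j u).
Proof.
move=> Hj Hint; elim: zs => [|z zs IH] //=.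
by rewrite (linB Hj) (linZ Hj) Hint IH.
Qed.

Lemma pop_eig (U : lmodType F) (op : U -> U) zs (z0 : int) w :
  lin op -> op w = z0%:~R *: w ->
  pop op zs w = (\prod_(z <- zs) (z0 - z)%:~R) *: w.
Proof.
move=> Hop Hw; elim: zs => [|z zs IH] /=; first by rewrite big_nil scale1r.
rewrite IH (linZ Hop) Hw big_cons !scalerA -scalerBl; congr (_ *: _).
by rewrite intrB mulrBl mulrC.
Qed.

Lemma intdiag_sub (U V : lmodType F) (a : U -> U) (hV : V -> V) (j : U -> V) :
  lin hV -> lin j -> injective j -> (forall u, j (a u) = hV (j u)) ->
  intdiag hV -> intdiag a.
Proof.
move=> Hh Hj jinj Hint Hd u.
have [l [Hl Hu]] := Hd (j u).
pose Z := undup (map fst l).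
pose zs z := filter (predC1 z) Z.
pose K z : F := \prod_(z' <- zs z) (z - z')%:~R.
pose x z := (K z)^-1 *: pop a (zs z) u.
have jx z : j (x z) = \sum_(p <- l | p.1 == z) p.2.
  rewrite /x (linZ Hj) (pop_comm _ _ Hj Hint) Hu (lin_sum (pop_lin _ Hh)).
  rewrite [RHS]big_mkcond scaler_sumr big_seq [RHS]big_seq; apply: eq_bigr => p pl.
  rewrite (pop_eig _ Hh (Hl p pl)) /=; case: eqP => [->|ne].
    rewrite scalerA mulVf ?scale1r //.
    rewrite prodf_seq_neq0; apply/allP => z' /=; rewrite /zs mem_filter /= => /andP [nz _].
    by apply/eqP => /intr_eq0' /eqP; rewrite subr_eq0 eq_sym (negbTE nz).
  have pz : p.1 \in zs z.
    by rewrite /zs mem_filter /= mem_undup (map_f fst pl) andbT; apply/eqP.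
  by rewrite (big_rem _ pz) /= subrr mul0r scale0r scaler0.
exists [seq (z, x z) | z <- Z]; split.
  move=> q /mapP [z zZ ->] /=; apply: jinj.
  rewrite Hint jx (lin_sum Hh) (linZ Hj) jx scaler_sumr big_seq_cond [RHS]big_seq_cond.
  by apply: eq_bigr => p /andP [pl /eqP <-]; exact: Hl.
apply: jinj; rewrite big_map (lin_sum Hj).
under eq_bigr do rewrite jx.
by rewrite partition_undup.
Qed.
End Char0.


Section Main.
Unset Implicit Arguments.
Variables (F : fieldType) (g : lieAlgebra F) (C : gmod g -> Prop)
  (du : forall V : gmod g, (V -> F) -> Prop) (h : g).
Hypotheses (ch0 : [pchar F] =i pred0) (HC : is_category C) (Hdu : is_duals C du)
  (Hdiag : forall V, C V -> intdiag (@gm_act _ _ V h))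
  (Hspow : forall V, C V -> forall s : F, s != 0 ->
     exists f, is_spow (@gm_act _ _ V h) s f /\ EndDu du f).
Set Implicit Arguments.

Lemma gm_lin (V : gmod g) (x : g) : lin (@gm_act _ _ V x).
Proof. by case: V => ? ? H ? ?; exact: H. Qed.

Local Notation hV V := (@gm_act _ _ V h).

Definition spowV (s : F) (V : gmod g) : V -> V :=
  match excluded_middle_informative (exists f, is_spow (hV V) s f /\ EndDu du f) with
  | left H => proj1_sig (constructive_indefinite_description _ H)
  | right _ => fun v => v end.
Arguments spowV : clear implicits.

Lemma spowV_spec V s : C V -> s != 0 -> is_spow (hV V) s (spowV s V) /\ EndDu du (spowV s V).
Proof.
move=> CV s0; rewrite /spowV; case: excluded_middle_informative => [H|H].
  exact: proj2_sig (constructive_indefinite_description _ H).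
by exfalso; apply: H; exact: Hspow.
Qed.

Lemma triv_eig (V0 : gmod g) : gtrivial1 V0 -> forall v : V0, hV V0 v = (0%:~R) *: v.
Proof. by move=> [_ H] v; rewrite H scale0r. Qed.

Lemma nat_spow (V W : gmod g) (al : V -> W) s fV fW :
  C V -> ghom al -> is_spow (hV V) s fV -> is_spow (hV W) s fW ->
  forall v, al (fV v) = fW (al v).
Proof.
move=> CV [Hal Hc] HV HW v; apply: (spow_nat Hal _ (Hdiag _ CV) HV HW).
by move=> u; rewrite Hc.
Qed.

Lemma tensor_spow (V W T : gmod g) (b : V -> W -> T) s fV fW fT :
  C V -> C W -> s != 0 -> gtensor b -> is_spow (hV V) s fV -> is_spow (hV W) s fW ->
  is_spow (hV T) s fT -> forall v w, fT (b v w) = b (fV v) (fW w).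
Proof.
move=> CV CW s0 [[Hb _] Hd] HV HW HT v w.
by apply: (spow_tensor s0 Hb _ (Hdiag _ CV) (Hdiag _ CW) HV HW HT) => u w'; rewrite Hd.
Qed.

Lemma inM_spow s : s != 0 -> inM C du (spowV s).
Proof.
move=> s0; split.
- split; first by move=> V CV; exact: (spowV_spec CV s0).2.
  move=> V W al CV CW Hal v.
  exact: (nat_spow CV Hal (spowV_spec CV s0).1 (spowV_spec CW s0).1).
- move=> V W T b CV CW CT Hb v w.
  exact: (tensor_spow CV CW s0 Hb (spowV_spec CV s0).1 (spowV_spec CW s0).1 (spowV_spec CT s0).1).
- move=> V0 CV0 Ht v.
  by rewrite ((spowV_spec CV0 s0).1.2 0 v (triv_eig Ht v)) expr0z scale1r.
Qed.

Lemma partA (s : F) : s != 0 -> exists m, inM C du m /\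
     forall V, C V -> is_spow (hV V) s (m V).
Proof.
by move=> s0; exists (spowV s); split; [exact: inM_spow | move=> V CV; exact: (spowV_spec CV s0).1].
Qed.


Section LF.
Variables (U : lmodType F) (phi : U -> F) (Hphi : linfun phi).
Lemma lf0 : phi 0 = 0. Proof. exact: (lin0 (linfun_lin Hphi)). Qed.
Lemma lfD u v : phi (u + v) = phi u + phi v. Proof. exact: (linD (linfun_lin Hphi)). Qed.
Lemma lfZ a u : phi (a *: u) = a * phi u. Proof. exact: (linZ (linfun_lin Hphi)). Qed.
Lemma lfB u v : phi (u - v) = phi u - phi v. Proof. exact: (linB (linfun_lin Hphi)). Qed.
Lemma lf_sum (I : Type) (r : seq I) (P : pred I) (G : I -> U) :
  phi (\sum_(i <- r | P i) G i) = \sum_(i <- r | P i) phi (G i).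
Proof. exact: (big_morph phi lfD lf0). Qed.

Lemma phi_spow (a : U -> U) s f l : is_spow a s f -> eigl a l ->
  phi (f (\sum_(p <- l) p.2)) = \sum_(p <- l) phi p.2 * s ^ p.1.
Proof.
move=> Hf Hl; rewrite (spow_sum Hf Hl) lf_sum; apply: eq_bigr => p _.
by rewrite lfZ mulrC.
Qed.

Lemma phi_act (a : U -> U) l : lin a -> eigl a l ->
  phi (a (\sum_(p <- l) p.2)) = \sum_(p <- l) phi p.2 * p.1%:~R.
Proof.
move=> Ha Hl; rewrite (lin_sum Ha) lf_sum big_seq [RHS]big_seq; apply: eq_bigr => p pl.
by rewrite Hl // lfZ mulrC.
Qed.
End LF.

Lemma du_lf (V : gmod g) phi : C V -> du V phi -> linfun phi.
Proof. by case: Hdu => H _ _ _ _ CV; exact: H. Qed.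

Lemma sep (V : gmod g) (v : V) : C V -> v != 0 -> exists phi, du V phi /\ phi v != 0.
Proof.
move=> CV v0; apply: NNPP => Hn; move/negP: v0; apply.
case: Hdu => _ _ Hs _ _; apply/eqP; apply: Hs => // phi Hphi.
apply/eqP; apply: negbNE; apply/negP => Hne; apply: Hn; by exists phi.
Qed.

Lemma du_comb (V : gmod g) phi psi a : C V -> du V phi -> du V psi -> du V (fun v => a * phi v + psi v).
Proof. by case: Hdu => _ H _ _ _ CV; exact: (H V CV).2. Qed.

Lemma du_zero (V : gmod g) : C V -> du V (fun _ => 0).
Proof. by case: Hdu => _ H _ _ _ CV; exact: (H V CV).1. Qed.

Lemma du_scale (V : gmod g) phi a : C V -> du V phi -> du V (fun v => a * phi v).
Proof.
move=> CV Hp; have := du_comb a CV Hp (du_zero CV).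
by have -> : (fun v => a * phi v + 0) = (fun v => a * phi v) by apply: functional_extensionality => v; rewrite addr0.
Qed.

Lemma tensor_nz (V W T : gmod g) (b : V -> W -> T) (v : V) (w : W) :
  C V -> C W -> gtensor b -> v != 0 -> w != 0 -> b v w != 0.
Proof.
move=> CV CW [[Hb Hu] _] v0 w0.
have [phi [Hphi pv]] := sep CV v0; have [psi [Hpsi pw]] := sep CW w0.
have lphi := du_lf CV Hphi; have lpsi := du_lf CW Hpsi.
have Bf : bilin (fun (u : V) (w' : W) => (phi u * psi w' : F^o)).
  split => [w'|u] c x y /=.
    by rewrite lphi mulrDl -mulrA.
  by rewrite lpsi mulrDr mulrA [phi u * c]mulrC -mulrA.
have [g0 [Hg0 Hg0b _]] := Hu _ _ Bf.
apply/negP => /eqP H0; have := Hg0b v w; rewrite H0 (lin0 Hg0) => /esym /eqP.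
by rewrite mulf_eq0 (negbTE pv) (negbTE pw).
Qed.

Lemma tensor_eig (V W T : gmod g) (b : V -> W -> T) (v : V) (w : W) (z z' : int) :
  gtensor b -> hV V v = z%:~R *: v -> hV W w = z'%:~R *: w ->
  hV T (b v w) = (z + z')%:~R *: b v w.
Proof.
move=> [[[Hb1 Hb2] _] Hd] Hv Hw.
by rewrite Hd Hv Hw (linZ (Hb1 _)) (linZ (Hb2 _)) intrD scalerDl.
Qed.

Lemma EV0 : EV C h 0.
Proof.
case: HC => _ _ _ _ [[V0 [CV0 [[u0 [u00 _]] Ht]]] _].
by exists V0; split => //; exists u0; split => //; rewrite Ht scale0r.
Qed.

Lemma EVadd z z' : EV C h z -> EV C h z' -> EV C h (z + z').
Proof.
move=> [V [CV [v [v0 Hv]]]] [W [CW [w [w0 Hw]]]].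
case: HC => _ _ _ Ht _; have [T [b [CT Hb]]] := Ht V W CV CW.
exists T; split => //; exists (b v w); split; first exact: tensor_nz.
exact: tensor_eig.
Qed.



Lemma locfinB : locfin C h.
Proof.
move=> V CV v; have [l [Hl Hv]] := Hdiag V CV v.
have Hs i : (i < size l)%N -> hV V (map snd l)`_i = ((nth (0, 0) l i).1)%:~R *: (map snd l)`_i.
  move=> il; rewrite (nth_map (0, 0)) //; apply: Hl; exact: mem_nth.
exists (map snd l); split.
  exists (fun _ => 1); rewrite Hv -(big_map snd predT id) (big_nth 0) big_mkord.
  by apply: eq_bigr => i _; rewrite scale1r.
move=> w [c ->]; exists (fun i => c i * ((nth (0, 0) l i).1)%:~R).
rewrite (lin_sum (@gm_lin V h)); apply: eq_bigr => i _.
have il : (i < size l)%N by rewrite -(size_map snd l); exact: ltn_ord i.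
by rewrite (linZ (@gm_lin V h)) Hs // scalerA.
Qed.

Lemma CFe_diag (U : lmodType F) (a : U -> U) : CFe C h a -> intdiag a.
Proof.
move=> [_ _ [V [j [CV Lj ij Hint]]]].
exact: (intdiag_sub ch0 (@gm_lin V h) Lj ij Hint (Hdiag V CV)).
Qed.

Lemma CFe_spow_ex (U : lmodType F) (a : U -> U) s : CFe C h a -> s != 0 -> exists f, is_spow a s f.
Proof.
move=> Ha s0; have Hda := CFe_diag Ha.
case: Ha => [La _ [V [j [CV Lj ij Hint]]]].
have [fV [HfV _]] := Hspow V CV s s0.
have Hex u : exists x, j x = fV (j u).
  have [l [Hl ->]] := Hda u.
  exists (\sum_(p <- l) s ^ p.1 *: p.2).
  have Hlj : eigl (hV V) [seq (p.1, j p.2) | p <- l].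
    move=> q /mapP [p pl ->] /=; by rewrite -Hint Hl // (linZ Lj).
  rewrite (lin_sum Lj) -[X in fV X](big_map (fun p => (p.1, j p.2)) predT (fun q => q.2)).
  rewrite (lin_sum Lj) (spow_sum HfV Hlj) big_map; apply: eq_bigr => p _.
  by rewrite (linZ Lj).
pose f u := proj1_sig (constructive_indefinite_description _ (Hex u)).
have Hf u : j (f u) = fV (j u) := proj2_sig (constructive_indefinite_description _ (Hex u)).
exists f; split.
  move=> c u v; apply: ij; rewrite Hf (linD Lj) (linZ Lj) (linD HfV.1) (linZ HfV.1).
  by rewrite (linD Lj) (linZ Lj) !Hf.
move=> z w Hw; apply: ij; rewrite Hf (linZ Lj) (HfV.2 z) //.
by rewrite -Hint Hw (linZ Lj).
Qed.

Definition pickU (U : lmodType F) (a : U -> U) (s : F) : U -> U :=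
  match excluded_middle_informative (exists f, is_spow a s f) with
  | left H => proj1_sig (constructive_indefinite_description _ H)
  | right _ => fun u => u end.

Lemma pickU_spec (U : lmodType F) (a : U -> U) s : CFe C h a -> s != 0 -> is_spow a s (pickU a s).
Proof.
move=> Ha s0; rewrite /pickU; case: excluded_middle_informative => [H|H].
  exact: proj2_sig (constructive_indefinite_description _ H).
by exfalso; apply: H; exact: CFe_spow_ex.
Qed.

Definition DD (d : natT' F) := exists s : F, s != 0 /\
  forall (U : lmodType F) (a : U -> U), CFe C h a -> is_spow a s (d U a).

Lemma DD_inMFe d : DD d -> inMFe C h d.
Proof.
move=> [s [s0 Hd]]; split.
- by move=> U a Ha; exact: (Hd U a Ha).1.
- move=> U a W a' f Ha Ha' Lf Hint u.
  exact: (spow_nat Lf Hint (CFe_diag Ha) (Hd U a Ha) (Hd W a' Ha')).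
- move=> U a W a' T c b Ha Ha' Hc [[Hb _] Hbt] u w.
  exact: (spow_tensor s0 Hb Hbt (CFe_diag Ha) (CFe_diag Ha') (Hd U a Ha) (Hd W a' Ha') (Hd T c Hc)).
- move=> U a Ha _ Ha0 u.
  by rewrite ((Hd U a Ha).2 0 u) ?expr0z ?scale1r // Ha0 scale0r.
Qed.

Lemma regular_CFe (U : lmodType F) (a : U -> U) (x : U) (z : int) :
  CFe C h a -> x != 0 -> a x = z%:~R *: x -> CFe C h (fun c : F^o => z%:~R * c).
Proof.
move=> [La _ [V [j [CV Lj ij Hint]]]] x0 Hx; split.
- by move=> c u v /=; rewrite mulrDr mulrCA.
- exists [:: (1 : F^o)] => v; exists (fun _ => v); rewrite big_ord1 /=.
  by rewrite [_ *: _]mulr1.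
- exists V, (fun c : F^o => j (c *: x)); split => //.
  + move=> c u v /=; by rewrite scalerDl -scalerA (linD Lj) (linZ Lj).
  + move=> c c' /ij /eqP; rewrite -subr_eq0 -scalerBl scaler_eq0 (negbTE x0) orbF subr_eq0.
    by move/eqP.
  + move=> c /=; rewrite -Hint (linZ La) Hx scalerA; congr (j (_ *: _)).
    by rewrite [_ * c]mulrC.
Qed.

Lemma densityB f : coordMFe C h f -> (forall d, DD d -> f d = 0) ->
  forall m, inMFe C h m -> f m = 0.
Proof.
move=> [U [a [phi [u [Ha Hphi Hf]]]]] HD m Hm.
have [Hm1 Hm2 _ _] := Hm.
have [l [Hl Hu]] := CFe_diag Ha u.
pose chi z := m F^o (fun c : F^o => z%:~R * c) 1 : F.
have Hchi p : p \in l -> m U a p.2 = chi p.1 *: p.2.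
  move=> pl; have [->|x0] := eqVneq p.2 0.
    by rewrite (lin0 (Hm1 U a Ha)) scaler0.
  have Hc := regular_CFe Ha x0 (Hl p pl).
  have := Hm2 F^o (fun c : F^o => (p.1)%:~R * c) U a (fun c : F^o => c *: p.2) Hc Ha.
  case: Ha => [La _ _].
  move=> /(_ _ _ 1); rewrite scale1r => H; rewrite -H //.
    by move=> c v w /=; rewrite scalerDl scalerA.
  by move=> c /=; rewrite (linZ La) (Hl p pl) scalerA mulrC.
have Hd s : s != 0 -> DD (fun U a => pickU a s).
  by move=> s0; exists s; split => // U' a' Ha'; exact: pickU_spec.
have H0 s : s != 0 -> \sum_(q <- [seq (phi p.2, p.1) | p <- l]) q.1 * s ^ q.2 = 0.
  move=> s0; have := HD _ (Hd s s0); rewrite Hf; last exact: DD_inMFe (Hd s s0).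
  by rewrite Hu (phi_spow Hphi (pickU_spec Ha s0) Hl) big_map.
have := laurent0 ch0 H0 chi; rewrite big_map /= => E.
rewrite Hf // Hu (lin_sum (Hm1 U a Ha)) (lf_sum Hphi) -[RHS]E big_seq [RHS]big_seq.
by apply: eq_bigr => p pl; rewrite Hchi // (lfZ Hphi) mulrC.
Qed.

Lemma intlocfinB : int_locfin C du h.
Proof.
split; first exact: locfinB.
exists DD; split.
- exact: DD_inMFe.
- exists 1; split; first exact: oner_neq0.
  move=> U a Ha; split => // z w _; by rewrite exp1rz scale1r.
- move=> d d' [s [s0 Hd]] [t [t0 Hd']]; exists (s * t); split; first exact: mulf_neq0.
  move=> U a Ha; split; first exact: lin_comp (Hd U a Ha).1 (Hd' U a Ha).1.
  move=> z w Hw; rewrite ((Hd' U a Ha).2 z w Hw) (linZ (Hd U a Ha).1) ((Hd U a Ha).2 z w Hw).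
  by rewrite scalerA expfzMl mulrC.
- exact: densityB.
- move=> d [s [s0 Hd]] V CV; have [fV [HfV HE]] := Hspow V CV s s0.
  exists fV; split => // U a j Ha Lj ij Hint u.
  by rewrite (spow_nat Lj Hint (CFe_diag Ha) (Hd U a Ha) HfV).
Qed.

Section WithTh.
Unset Implicit Arguments.
Variable th : F -> natT g.
Set Implicit Arguments.
Hypothesis Hth : forall s : F, s != 0 -> inM C du (th s) /\
        forall V, C V -> is_spow (hV V) s (th s V).

Lemma th_spec s (V : gmod g) : s != 0 -> C V -> is_spow (hV V) s (th s V).
Proof. by move=> s0 CV; exact: (Hth s0).2 V CV. Qed.

Lemma th1 : natEq C (th 1) (fun V v => v).
Proof.
move=> V CV v; have [l [Hl ->]] := Hdiag V CV v.
rewrite (spow_sum (th_spec (oner_neq0 F) CV) Hl); apply: eq_bigr => p _.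
by rewrite exp1rz scale1r.
Qed.

Lemma thmul (s t : F) : s != 0 -> t != 0 ->
  natEq C (th (s * t)) (fun V v => th s V (th t V v)).
Proof.
move=> s0 t0 V CV v.
have Hc : is_spow (hV V) (s * t) (fun v => th s V (th t V v)).
  split; first exact: lin_comp (th_spec s0 CV).1 (th_spec t0 CV).1.
  move=> z w Hw; rewrite ((th_spec t0 CV).2 z w Hw) (linZ (th_spec s0 CV).1).
  by rewrite ((th_spec s0 CV).2 z w Hw) scalerA expfzMl mulrC.
exact: (spow_unique (Hdiag V CV) (th_spec (mulf_neq0 s0 t0) CV) Hc).
Qed.

Lemma laurentB f : coordM C du f -> laurent (fun s => f (th s)).
Proof.
move=> [V [phi [v [CV Hphi Hf]]]]; have [l [Hl Hv]] := Hdiag V CV v.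
exists [seq (phi p.2, p.1) | p <- l] => s s0.
rewrite Hf; last exact: (Hth s0).1.
by rewrite Hv (phi_spow (du_lf CV Hphi) (th_spec s0 CV) Hl) big_map.
Qed.

Lemma imageB1 (q : F -> F) : (exists f, coordM C du f /\ forall s, s != 0 -> q s = f (th s)) ->
  (exists l : seq (F * int), (forall p, p \in l -> EV C h p.2) /\
      forall s, s != 0 -> q s = \sum_(p <- l) p.1 * s ^ p.2).
Proof.
move=> [f [[V [phi [v [CV Hphi Hf]]]] Hq]]; have [l [Hl Hv]] := Hdiag V CV v.
exists [seq (if p.2 == 0 then (0, 0%:Z) else (phi p.2, p.1)) | p <- l]; split.
  move=> p' /mapP [p pl ->]; case: eqP => [_|/eqP nz] /=; first exact: EV0.
  by exists V; split => //; exists p.2; split => //; exact: Hl.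
move=> s s0; rewrite Hq // Hf; last exact: (Hth s0).1.
rewrite Hv (phi_spow (du_lf CV Hphi) (th_spec s0 CV) Hl) big_map.
apply: eq_bigr => p _; case: eqP => [->|_] //=.
by rewrite (lf0 (du_lf CV Hphi)) !mul0r.
Qed.

Lemma coordM_add f1 f2 : coordM C du f1 -> coordM C du f2 -> coordM C du (fun m => f1 m + f2 m).
Proof.
move=> [V1 [phi1 [v1 [CV1 Hphi1 Hf1]]]] [V2 [phi2 [v2 [CV2 Hphi2 Hf2]]]].
case: HC => _ _ Hds _ _; have [D [i1 [i2 [p1 [p2 [CD Hd]]]]]] := Hds V1 V2 CV1 CV2.
have Hd' := Hd; case: Hd' => [[Li1 Li2 Lp1 Lp2 [E11 E22 E12 E21 _]] Gi1 Gi2 _ _].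
exists D, (fun d => phi1 (p1 d) + phi2 (p2 d)), (i1 v1 + i2 v2); split => //.
  case: Hdu => _ _ _ _ [_ Hsum _]; apply/(Hsum V1 V2 D i1 i2 p1 p2 CV1 CV2 CD Hd).
  by exists phi1, phi2; split.
move=> m Hm; have [[Hend Hnat] _ _] := Hm.
rewrite Hf1 // Hf2 // (linD (Hend D CD).1) -(Hnat _ _ _ CV1 CD Gi1) -(Hnat _ _ _ CV2 CD Gi2).
by rewrite (linD Lp1) (linD Lp2) E11 E12 E21 E22 addr0 add0r.
Qed.

Lemma coordM_zero : coordM C du (fun _ => 0).
Proof.
case: HC => _ _ _ _ [[V0 [CV0 _]] _].
by exists V0, (fun _ => 0), 0; split => //; exact: du_zero.
Qed.

Lemma coordM_single z c : EV C h z -> exists f, coordM C du f /\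
  forall s, s != 0 -> c * s ^ z = f (th s).
Proof.
move=> [V [CV [w [w0 Hw]]]]; have [phi [Hphi pw]] := sep CV w0.
exists (fun m => c / phi w * phi (m V w)); split.
  exists V, (fun x => c / phi w * phi x), w; split => //; exact: du_scale.
move=> s s0; rewrite ((th_spec s0 CV).2 z w Hw) (lfZ (du_lf CV Hphi)).
by rewrite [s ^ z * _]mulrC mulrA divfK.
Qed.

Lemma imageB2 (l : seq (F * int)) : (forall p, p \in l -> EV C h p.2) ->
  exists f, coordM C du f /\ forall s, s != 0 -> \sum_(p <- l) p.1 * s ^ p.2 = f (th s).
Proof.
elim: l => [|p l IH] Hl.
  by exists (fun _ => 0); split; [exact: coordM_zero | move=> s _; rewrite big_nil].
have [f1 [Hf1 E1]] := coordM_single p.1 (Hl p (mem_head _ _)).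
have [f2 [Hf2 E2]] : exists f, coordM C du f /\ forall s, s != 0 -> \sum_(p <- l) p.1 * s ^ p.2 = f (th s).
  by apply: IH => q ql; apply: Hl; rewrite in_cons ql orbT.
exists (fun m => f1 m + f2 m); split; first exact: coordM_add.
by move=> s s0; rewrite big_cons E1 // E2.
Qed.


Lemma rep_act (V V' : gmod g) phi phi' (v : V) (v' : V') : C V -> C V' -> du V phi -> du V' phi' ->
  (forall s, s != 0 -> phi (th s V v) = phi' (th s V' v')) -> phi (hV V v) = phi' (hV V' v').
Proof.
move=> CV CV' Hphi Hphi' Hag.
have [l [Hl Hv]] := Hdiag V CV v; have [l' [Hl' Hv']] := Hdiag V' CV' v'.
have lp := du_lf CV Hphi; have lp' := du_lf CV' Hphi'.
pose L := [seq (phi p.2, p.1) | p <- l] ++ [seq (- phi' p.2, p.1) | p <- l'].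
have HL s : s != 0 -> \sum_(p <- L) p.1 * s ^ p.2 = 0.
  move=> s0; have := Hag s s0; rewrite Hv Hv' (phi_spow lp (th_spec s0 CV) Hl).
  rewrite (phi_spow lp' (th_spec s0 CV') Hl') => E.
  rewrite big_cat !big_map /= E -big_split big1 //= => p _; by rewrite mulNr subrr.
have := laurent0 ch0 HL (fun z => z%:~R).
rewrite big_cat !big_map /= Hv Hv' (phi_act lp (@gm_lin V h) Hl) (phi_act lp' (@gm_lin V' h) Hl').
move=> H; apply/eqP; rewrite -subr_eq0 -sumrN; apply/eqP; rewrite -[RHS]H; congr (_ + _).
by apply: eq_bigr => p _; rewrite mulNr.
Qed.

Definition Nth := fun m : natT g => exists s : F, s != 0 /\ m = th s.

Lemma vanish_act (V : gmod g) phi (v : V) : C V -> du V phi ->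
  (forall s, s != 0 -> phi (th s V v) = 0) -> phi (hV V v) = 0.
Proof.
move=> CV Hphi H; have := @rep_act V V phi (fun _ => 0) v v CV CV Hphi (du_zero CV).
by apply => s s0; rewrite H.
Qed.

Lemma partC_back (c : F) (y : natT g) : natEq C y (fun V v => c *: hV V v) -> inLie C du Nth y.
Proof.
move=> Hy.
have HP : isNat C du y.
  split.
    move=> V CV; split.
      move=> a u v; rewrite !(Hy V CV) (@gm_lin V h) scalerDr !scalerA mulrC //.
    move=> psi Hpsi.
    have -> : psi \o y V = (fun v => c * (fun v => psi (hV V v)) v + (fun _ => 0) v).
      apply: functional_extensionality => v /=.
      by rewrite (Hy V CV) (lfZ (du_lf CV Hpsi)) addr0.
    apply: du_comb => //; last exact: du_zero.
    by case: Hdu => _ _ _ Hact _; apply: Hact.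
  move=> V W al CV CW [Hal Hc] v; rewrite (Hy V CV) (Hy W CW) (linZ Hal).
  by rewrite Hc.
have Hrep : forall f, (exists r, forall (V : gmod g) phi (v : V), C V -> du V phi ->
     (forall m, inM C du m -> f m = phi (m V v)) -> r = phi (y V v)) \/
     ~ (exists (V : gmod g) phi (v : V), [/\ C V, du V phi & forall m, inM C du m -> f m = phi (m V v)]).
  move=> f; case: (classic (exists (V : gmod g) phi (v : V), [/\ C V, du V phi & forall m, inM C du m -> f m = phi (m V v)])) => [[V [phi [v [CV Hphi Hf]]]]|]; last by right.
  left; exists (phi (y V v)) => V' phi' v' CV' Hphi' Hf'.
  rewrite (Hy V CV) (Hy V' CV') (lfZ (du_lf CV Hphi)) (lfZ (du_lf CV' Hphi')); congr (_ * _).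
  apply: rep_act => // s s0; have Hm := (Hth s0).1.
  by rewrite -(Hf _ Hm) -(Hf' _ Hm).
split; last first.
  move=> delta Hdelta f [[V [phi [v [CV Hphi Hf]]]] Hvan].
  rewrite (Hdelta V phi v f CV Hphi Hf) (Hy V CV) (lfZ (du_lf CV Hphi)).
  rewrite (vanish_act CV Hphi) ?mulr0 // => s s0; rewrite -Hf ?Hvan //; first by exists s.
  exact: (Hth s0).1.
split => //.
- move=> V W T b CV CW CT [[[Hb1 Hb2] _] Hd] v w.
  rewrite (Hy T CT) (Hy V CV) (Hy W CW) Hd scalerDr (linZ (Hb1 _)) (linZ (Hb2 _)) //.
- move=> V0 CV0 [_ Ht] v; by rewrite (Hy V0 CV0) Ht scaler0.
- pose P f r := forall (V : gmod g) phi (v : V), C V -> du V phi ->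
     (forall m, inM C du m -> f m = phi (m V v)) -> r = phi (y V v).
  exists (fun f => match excluded_middle_informative (exists r, P f r) with
                   | left H => proj1_sig (constructive_indefinite_description _ H)
                   | right _ => 0 end).
  move=> V phi v f CV Hphi Hf; case: excluded_middle_informative => [H|H].
    exact: (proj2_sig (constructive_indefinite_description _ H)) V phi v CV Hphi Hf.
  exfalso; case: (Hrep f) => // Hn; apply: Hn; by exists V, phi, v.
Qed.

Section Fwd.
Unset Implicit Arguments.
Variable y : natT g.
Set Implicit Arguments.
Hypothesis Hy : inLie C du Nth y.

Lemma y_lin (V : gmod g) : C V -> lin (y V).
Proof. by case: Hy => [[[Hend _] _ _ _] _] CV; exact: (Hend V CV).1. Qed.

Lemma y_nat (V W : gmod g) (al : V -> W) : C V -> C W -> ghom al -> forall v, al (y V v) = y W (al v).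
Proof. by case: Hy => [[[_ Hnat] _ _ _] _]; exact: Hnat. Qed.

Lemma lam_phi (V : gmod g) (v : V) (z : int) phi : C V -> hV V v = z%:~R *: v -> du V phi ->
  phi v = 0 -> phi (y V v) = 0.
Proof.
move=> CV Hv Hphi pv.
case: Hy => [[_ _ _ [delta Hdelta]] Hvan].
rewrite -(Hdelta V phi v (fun m => phi (m V v)) CV Hphi (fun m _ => erefl)).
apply: Hvan => //; split; first by exists V, phi, v; split.
move=> m [s [s0 ->]]; rewrite ((th_spec s0 CV).2 z v Hv) (lfZ (du_lf CV Hphi)) pv mulr0 //.
Qed.

Lemma lam (V : gmod g) (v : V) (z : int) : C V -> v != 0 -> hV V v = z%:~R *: v ->
  exists la, y V v = la *: v.
Proof.
move=> CV v0 Hv; have [phi1 [Hphi1 p1v]] := sep CV v0.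
exists (phi1 (y V v) / phi1 v).
case: Hdu => _ _ Hs _ _; apply/eqP; rewrite -subr_eq0; apply/eqP; apply: Hs => // phi Hphi.
have H := lam_phi (phi := fun x => (- (phi v / phi1 v)) * phi1 x + phi x) CV Hv
   (du_comb _ CV Hphi1 Hphi).
have := H; rewrite /= mulNr divfK // addNr => /(_ erefl) /eqP.
rewrite addrC mulNr subr_eq0 => /eqP E.
rewrite (lfB (du_lf CV Hphi)) (lfZ (du_lf CV Hphi)) E; ring.
Qed.

Definition Eig (z : int) (la : F) := exists (V : gmod g) (v : V),
  [/\ C V, v != 0, hV V v = z%:~R *: v & y V v = la *: v].

Lemma Eig0 : Eig 0 0.
Proof.
case: HC => _ _ _ _ [[V0 [CV0 Ht]] _]; have [[u0 [u00 _]] _] := Ht.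
case: Hy => [[_ _ Htriv _] _].
exists V0, u0; split => //; first exact: triv_eig.
by rewrite Htriv // scale0r.
Qed.

Lemma scale_inj (U : lmodType F) (a b : F) (u : U) : u != 0 -> a *: u = b *: u -> a = b.
Proof.
move=> u0 /eqP; rewrite -subr_eq0 -scalerBl scaler_eq0 (negbTE u0) orbF subr_eq0.
by move/eqP.
Qed.

Lemma EigSame z la la' : Eig z la -> Eig z la' -> la = la'.
Proof.
move=> [V [v [CV v0 Hv Hyv]]] [W [w [CW w0 Hw Hyw]]].
case: HC => _ _ Hds _ _; have [D [i1 [i2 [p1 [p2 [CD Hd]]]]]] := Hds V W CV CW.
case: Hd => [[Li1 Li2 Lp1 Lp2 [E11 E22 E12 E21 _]] Gi1 Gi2 _ _].
pose d := i1 v + i2 w.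
have Hdd : hV D d = z%:~R *: d.
  rewrite /d (linD (@gm_lin D h)) -Gi1.2 -Gi2.2 Hv Hw (linZ Li1) (linZ Li2) scalerDr //.
have d0 : d != 0.
  apply/negP => /eqP d0; move/negP: v0; apply; apply/eqP.
  by have := congr1 p1 d0; rewrite /d (linD Lp1) E11 E12 addr0 (lin0 Lp1).
have [mu Hmu] := lam CD d0 Hdd.
have Hyd : y D d = i1 (la *: v) + i2 (la' *: w).
  by rewrite /d (linD (y_lin CD)) -(y_nat CV CD Gi1) -(y_nat CW CD Gi2) Hyv Hyw.
have E1 := congr1 p1 (etrans (esym Hyd) Hmu).
have E2 := congr1 p2 (etrans (esym Hyd) Hmu).
move: E1 E2; rewrite /d => H1 H2.
rewrite !(linD Lp1) !(linZ Lp1) !(linD Lp1) !E11 !E12 !addr0 in H1.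
rewrite !(linD Lp2) !(linZ Lp2) !(linD Lp2) !E21 !E22 !add0r in H2.
by rewrite (scale_inj v0 H1) (scale_inj w0 H2).
Qed.


Lemma EigAdd z z' la la' : Eig z la -> Eig z' la' -> Eig (z + z') (la + la').
Proof.
move=> [V [v [CV v0 Hv Hyv]]] [W [w [CW w0 Hw Hyw]]].
case: HC => _ _ _ Ht _; have [T [b [CT Hb]]] := Ht V W CV CW.
exists T, (b v w); split => //; first exact: tensor_nz; first exact: tensor_eig.
case: Hy => [[_ Hten _ _] _]; rewrite (Hten V W T b CV CW CT Hb) Hyv Hyw.
case: Hb => [[[Hb1 Hb2] _] _].
by rewrite (linZ (Hb1 _)) (linZ (Hb2 _)) scalerDl.
Qed.

Lemma EigMul z la n : Eig z la -> Eig (z *+ n) (la *+ n).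
Proof.
move=> H; elim: n => [|n IH]; first by rewrite !mulr0n; exact: Eig0.
by rewrite !mulrS; exact: EigAdd.
Qed.

Lemma posz_mulrn (a b : nat) : (a%:Z *+ b) = (a * b)%N%:Z.
Proof. elim: b => [|b IH]; first by rewrite mulr0n muln0. by rewrite mulrS IH mulnS PoszD. Qed.

Lemma EigRel' (m n : nat) (b b' : bool) la la' :
  Eig ((-1) ^+ b * m%:Z) la -> Eig ((-1) ^+ b' * n%:Z) la' ->
  la * ((-1) ^+ b' * n%:Z)%:~R = la' * ((-1) ^+ b * m%:Z)%:~R.
Proof.
move=> HA HB; have A := EigMul n HA; have B := EigMul m HB.
rewrite -!mulrnAr !posz_mulrn in A B.
rewrite !intrM -[(n%:Z)%:~R]/(n%:R) -[(m%:Z)%:~R]/(m%:R).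
case: b HA A; case: b' HB B => HB B HA A /=; rewrite ?expr0 ?expr1 ?mul1r ?mulN1r in A B *.
- rewrite mulnC in B; have := EigSame A B.
  by rewrite !mulrN !mulr_natr => ->.
- have := EigAdd A B; rewrite mulnC addNr => H; have := EigSame H Eig0.
  by rewrite mulrN !mulr_natr => /eqP; rewrite addr_eq0 => /eqP.
- have := EigAdd A B; rewrite mulnC addrN => H; have := EigSame H Eig0.
  by rewrite mulrN !mulr_natr => /eqP; rewrite addr_eq0 => /eqP ->; rewrite opprK.
- rewrite mulnC in B; have := EigSame A B.
  by rewrite !mulr_natr => ->.
Qed.



Lemma EigRel z z' la la' : Eig z la -> Eig z' la' -> la * z'%:~R = la' * z%:~R.
Proof.
move=> HA HB.
have HA' : Eig ((-1) ^+ (z < 0)%R * (absz z)%:Z) la by rewrite -intEsign.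
have HB' : Eig ((-1) ^+ (z' < 0)%R * (absz z')%:Z) la' by rewrite -intEsign.
by have := EigRel' HA' HB'; rewrite -!intEsign.
Qed.

Lemma partC_fwd : exists c : F, natEq C y (fun V v => c *: hV V v).
Proof.
have [c Hc] : exists c, forall z la, Eig z la -> la = c * z%:~R.
  case: (classic (exists z la, Eig z la /\ z != 0)) => [[z0 [la0 [E0 z00]]] | Hno].
    have zF : (z0%:~R : F) != 0 by apply/eqP => /(intr_eq0' ch0) /eqP; rewrite (negbTE z00).
    exists (la0 / z0%:~R) => z la E; have := EigRel E E0 => H.
    by apply: (mulIf zF); rewrite H mulrAC divfK.
  exists 0 => z la E; rewrite mul0r.
  case: (eqVneq z 0) => [z0|nz]; last by exfalso; apply: Hno; exists z, la.
  by subst z; exact: EigSame E Eig0.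
exists c => V CV v; have [l [Hl ->]] := Hdiag V CV v.
rewrite (lin_sum (y_lin CV)) (lin_sum (@gm_lin V h)) scaler_sumr big_seq [RHS]big_seq.
apply: eq_bigr => p pl.
case: (eqVneq p.2 0) => [->| nz]; first by rewrite (lin0 (y_lin CV)) (lin0 (@gm_lin V h)) scaler0.
have [la Hla] := lam CV nz (Hl p pl).
rewrite Hla (Hl p pl) scalerA (Hc p.1 la) //.
by exists V, p.2; split => //; exact: Hl.
Qed.
End Fwd.
End WithTh.
End Main.

Theorem theorem2p37 (F : fieldType) (g : lieAlgebra F) (C : gmod g -> Prop)
  (du : forall V : gmod g, (V -> F) -> Prop) (h : g) :
  [pchar F] =i pred0 ->
  is_category C -> is_duals C du ->
  (forall V, C V -> intdiag (@gm_act _ _ V h)) ->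
  (forall V, C V -> forall s : F, s != 0 ->
     exists f, is_spow (@gm_act _ _ V h) s f /\ EndDu du f) ->
  int_locfin C du h /\
  (* (a) *)
  (forall s : F, s != 0 -> exists m, inM C du m /\
     forall V, C V -> is_spow (@gm_act _ _ V h) s (m V)) /\
  (* (b), (c): for the map t_h : s |-> s^h *)
  (forall th : F -> natT g,
     (forall s : F, s != 0 -> inM C du (th s) /\
        forall V, C V -> is_spow (@gm_act _ _ V h) s (th s V)) ->
     [/\ EV C h 0 /\ (forall z z', EV C h z -> EV C h z' -> EV C h (z + z')),
         natEq C (th 1) (fun V v => v) /\
         (forall s t : F, s != 0 -> t != 0 ->
            natEq C (th (s * t)) (fun V v => th s V (th t V v))),
         (forall f, coordM C du f -> laurent (fun s => f (th s))),
         (forall q : F -> F,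
            (exists f, coordM C du f /\ forall s, s != 0 -> q s = f (th s)) <->
            (exists l : seq (F * int), (forall p, p \in l -> EV C h p.2) /\
               forall s, s != 0 -> q s = \sum_(p <- l) p.1 * s ^ p.2)) &
         (* (c) Lie(T_h) = F h, where T_h = image of t_h *)
         (forall y : natT g,
            inLie C du (fun m => exists s : F, s != 0 /\ m = th s) y <->
            exists c : F, natEq C y (fun V v => c *: gm_act h v))]).
Proof.
move=> ch0 HC Hdu Hdiag Hspow.
split; first by eapply intlocfinB; eassumption.
split; first by move=> s s0; eapply partA; eassumption.
move=> th Hth; split.
- split; first by eapply EV0; eassumption.
  move=> z z' H1 H2; eapply EVadd; [exact: HC | exact: Hdu | exact: H1 | exact: H2].
- split; first by eapply th1; eassumption.
  move=> s t s0 t0; eapply thmul; eassumption.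
- move=> f Hf; eapply laurentB; eassumption.
- move=> q; split.
    move=> H; eapply imageB1; eassumption.
  move=> [l [Hl Hq]].
  have [f [Hf E]] := @imageB2 _ _ _ _ _ HC Hdu _ Hth _ Hl.
  by exists f; split => // s s0; rewrite Hq // E.
- move=> y; split.
    move=> Hy; eapply partC_fwd; eassumption.
  move=> [c Hc]; eapply partC_back; eassumption.
Qed.
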